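(* Let $d\ge 2$, $x\in\mathbb{R}^d$, $V\subseteq\{1,\dots,d\}$ (of any parity), and let $\theta\in\{\pm1\}^d$ with $\theta_j=1$ for $j\in V$ and $\theta_j=-1$ for $j\notin V$. Let $v = \Pi_{\{w\in\mathbb{R}^d:\theta^\top w = |V|-1\}}(x)$ and let $F := \{w\in[0,1]^d : \theta^\top w = |V|-1\}$, assumed nonempty, and $z = \Pi_F(x)$. Let $i\in\{1,\dots,d\}$. Then: 1. If $v_i>1$ and $\theta_i = 1$, then $z_i = 1$. 2. If $v_i<0$ and $\theta_i=-1$, then $z_i=0$.
   Context: $\Pi_C(x)$ denotes the Euclidean projection of $x$ onto a closed convex set $C$. *)

(* Defs.v *)
From HB Require Import structures.
From mathcomp Require Import all_boot all_order all_algebra.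
From mathcomp Require Import reals.
Set Implicit Arguments. Unset Strict Implicit. Unset Printing Implicit Defensive.
Import Order.TTheory GRing.Theory Num.Theory.
Local Open Scope ring_scope.

Definition eucl_dist (R : realType) (d : nat) (x y : 'I_d -> R) : R :=
  Num.sqrt (\sum_(j < d) (x j - y j) ^+ 2).

(* z is the Euclidean projection of x onto the set C (a minimiser of the
   distance to x over C); for closed convex nonempty C it is unique. *)
Definition is_proj (R : realType) (d : nat) (C : ('I_d -> R) -> Prop)
  (x z : 'I_d -> R) : Prop :=
  C z /\ forall w, C w -> eucl_dist x z <= eucl_dist x w.

Definition theta (R : realType) (d : nat) (V : {set 'I_d}) (j : 'I_d) : R :=
  if j \in V then 1 else -1.

Definition hyp (R : realType) (d : nat) (V : {set 'I_d}) (w : 'I_d -> R) : Prop :=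
  \sum_(j < d) theta R V j * w j = (#|V|%:R - 1).

Definition face (R : realType) (d : nat) (V : {set 'I_d}) (w : 'I_d -> R) : Prop :=
  (forall j, 0 <= w j <= 1) /\ hyp V w.

(* Main.v *)
Require Import Defs.
From HB Require Import structures.
From mathcomp Require Import all_boot all_order all_algebra.
From mathcomp Require Import reals ring lra.
Import Order.TTheory GRing.Theory Num.Theory.
Local Open Scope ring_scope.


Lemma sum_2pt {R : realType} {d : nat} (f g : 'I_d -> R) (i j : 'I_d) : i != j ->
  (forall k, k != i -> k != j -> f k = g k) ->
  \sum_k f k = \sum_k g k + (f i - g i) + (f j - g j).
Proof.
move=> nij H.
rewrite (bigD1 i) // (bigD1 j) 1?eq_sym //= [in RHS](bigD1 i) //.
rewrite [in RHS](bigD1 j) 1?eq_sym //=.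
rewrite (eq_bigr g); last by move=> k /andP[h1 h2]; apply: H.
set S := \sum_(_ < _ | _) _; lra.
Qed.

Definition upd {R : realType} {d : nat} (p : 'I_d -> R) (i j : 'I_d) (t : R) : 'I_d -> R :=
  fun k => if k == i then p i - t else if k == j then p j + t else p k.

Lemma upd_sum {R : realType} {d : nat} (p : 'I_d -> R) (i j : 'I_d) (t : R) : i != j -> \sum_k upd p i j t k = \sum_k p k.
Proof.
move=> nij; rewrite (sum_2pt (upd p i j t) p i j nij).
  have nji := nij; rewrite eq_sym in nji; rewrite /upd !eqxx (negbTE nji) /=.
  set S := \sum_(_ < _) _; lra.
by move=> k hi hj; rewrite /upd (negbTE hi) (negbTE hj).
Qed.

Lemma upd_sq {R : realType} {d : nat} (y p : 'I_d -> R) i j t : i != j ->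
  \sum_k (y k - upd p i j t k) ^+ 2 = \sum_k (y k - p k) ^+ 2
   + 2 * t * ((y i - p i) - (y j - p j)) + 2 * t ^+ 2.
Proof.
move=> nij; rewrite (sum_2pt (fun k => (y k - upd p i j t k) ^+ 2) (fun k => (y k - p k) ^+ 2) i j nij).
  have nji := nij; rewrite eq_sym in nji; rewrite /upd !eqxx (negbTE nji) /=.
  set S := \sum_(_ < _) _; lra.
by move=> k /negbTE hi /negbTE hj; rewrite /upd hi hj.
Qed.

Lemma simplex {R : realType} {d : nat} (y q p : 'I_d -> R) (i : 'I_d) :
  \sum_k q k = 1 -> \sum_k p k = 1 -> (forall k, 0 <= p k) ->
  (forall Q, \sum_k Q k = 1 -> \sum_k (y k - q k) ^+ 2 <= \sum_k (y k - Q k) ^+ 2) ->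
  (forall Q, \sum_k Q k = 1 -> (forall k, 0 <= Q k) ->
     \sum_k (y k - p k) ^+ 2 <= \sum_k (y k - Q k) ^+ 2) ->
  q i < 0 -> p i = 0.
Proof.
move=> sq sp p0 Aq Bp qi.
have eqa : forall j, y j - q j = y i - q i.
  move=> j; have [->//|nij] := eqVneq i j.
  have := Aq _ (etrans (upd_sum q i j (((y j - q j) - (y i - q i)) / 2) nij) sq).
  rewrite upd_sq // -addrA lerDl.
  set a := y i - q i; set b := y j - q j => h2.
  have e : 2 * ((b - a) / 2) * (a - b) + 2 * ((b - a) / 2) ^+ 2 = - ((b - a) ^+ 2 / 2) by field.
  rewrite e in h2; have h5 := sqr_ge0 (b - a).
  have h4 : (b - a) ^+ 2 = 0 by lra.
  by move/eqP: h4; rewrite sqrf_eq0 subr_eq0 => /eqP.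
have [pi0|pipos] := eqVneq (p i) 0; first by [].
have pip : 0 < p i by rewrite lt_def pipos p0.
have leb : forall j, y j - p j <= y i - p i.
  move=> j; have [->//|nij] := eqVneq i j.
  rewrite leNgt; apply/negP => hlt.
  set a := y i - p i; set b := y j - p j; have hab : a < b by [].
  pose t := if p i <= (b - a) / 2 then p i else (b - a) / 2.
  have t0 : 0 < t by rewrite /t; case: ifP => _; lra.
  have tle : t <= p i by rewrite /t; case: ifP => h; lra.
  have tle2 : t <= (b - a) / 2 by rewrite /t; case: ifP => h; lra.
  have := Bp _ (etrans (upd_sum p i j t nij) sp).
  have Q0 : forall k, 0 <= upd p i j t k.
    move=> k; rewrite /upd; case: ifP => _; first lra.
    case: ifP => _; last exact: p0.
    by have := p0 j; lra.
  move=> /(_ Q0); rewrite upd_sq // -addrA lerDl -/a -/b => h.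
  have : 2 * t * (a - b) + 2 * t ^+ 2 = 2 * t * (t - (b - a)) by ring.
  move=> e; move: h; rewrite e; apply/negP; rewrite -ltNge.
  rewrite pmulr_rlt0; lra.
have s1 : \sum_k (y k - q k) = \sum_k (y k - p k) by rewrite !sumrB sq sp.
have s2 : \sum_k (y k - q k) = (y i - q i) *+ d.
  by rewrite (eq_bigr _ (fun j _ => eqa j)) sumr_const card_ord.
have s3 : \sum_k (y k - p k) <= (y i - p i) *+ d.
  by rewrite -[d in _ *+ d]card_ord -sumr_const; apply: ler_sum => j _; apply: leb.
have dpos : (0 < d)%N := leq_ltn_trans (leq0n i) (ltn_ord i).
have : (y i - q i) *+ d <= (y i - p i) *+ d by rewrite -s2 s1.
rewrite ler_pMn2r // lerD2l lerN2 => h.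
by exfalso; move: (lt_le_trans pip (le_trans h (ltW qi))); rewrite ltxx.
Qed.

Definition cV {R : realType} {d : nat} (V : {set 'I_d}) (k : 'I_d) : R :=
  if k \in V then 1 else 0.
Definition PP {R : realType} {d : nat} (V : {set 'I_d}) (w : 'I_d -> R) k : R :=
  cV V k - theta R V k * w k.
Definition Pinv {R : realType} {d : nat} (V : {set 'I_d}) (Q : 'I_d -> R) k : R :=
  theta R V k * (cV V k - Q k).

Lemma thetaK {R : realType} {d : nat} (V : {set 'I_d}) k :
  theta R V k * theta R V k = 1.
Proof. by rewrite /theta; case: (k \in V); rewrite ?mulr1 ?mulrNN ?mulr1. Qed.

Lemma PPinv {R : realType} {d : nat} (V : {set 'I_d}) (Q : 'I_d -> R) k :
  PP V (Pinv V Q) k = Q k.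
Proof. by rewrite /PP /Pinv /theta; case: (k \in V); ring. Qed.

Lemma distP {R : realType} {d : nat} (V : {set 'I_d}) (x w : 'I_d -> R) :
  \sum_k (x k - w k) ^+ 2 = \sum_k (PP V x k - PP V w k) ^+ 2.
Proof.
apply: eq_bigr => k _.
by rewrite /PP /theta; case: (k \in V); ring.
Qed.

Lemma sumP {R : realType} {d : nat} (V : {set 'I_d}) (w : 'I_d -> R) :
  \sum_k PP V w k = #|V|%:R - \sum_k theta R V k * w k.
Proof.
rewrite /PP sumrB; congr (_ - _).
by rewrite /cV -big_mkcond /= sumr_const.
Qed.

Lemma hyp_iff {R : realType} {d : nat} (V : {set 'I_d}) (w : 'I_d -> R) :
  hyp V w <-> \sum_k PP V w k = 1.
Proof.
rewrite /hyp sumP; split=> h; lra.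
Qed.

Lemma dist_le {R : realType} {d : nat} {x a b : 'I_d -> R} :
  eucl_dist x a <= eucl_dist x b ->
  \sum_k (x k - a k) ^+ 2 <= \sum_k (x k - b k) ^+ 2.
Proof.
by rewrite /eucl_dist ler_sqrt //; apply: sumr_ge0 => k _; apply: sqr_ge0.
Qed.

Lemma sumPinv {R : realType} {d : nat} (V : {set 'I_d}) (Q : 'I_d -> R) :
  \sum_k PP V (Pinv V Q) k = \sum_k Q k.
Proof. by apply: eq_bigr => k _; rewrite PPinv. Qed.

Lemma distPinv {R : realType} {d : nat} (V : {set 'I_d}) (x Q : 'I_d -> R) :
  \sum_k (x k - Pinv V Q k) ^+ 2 = \sum_k (PP V x k - Q k) ^+ 2.
Proof. by rewrite (distP V); apply: eq_bigr => k _; rewrite PPinv. Qed.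

Theorem theorem2 (R : realType) (d : nat) (x : 'I_d -> R) (V : {set 'I_d})
  (v z : 'I_d -> R) (i : 'I_d) :
  (2 <= d)%N ->
  is_proj (hyp V) x v ->
  (exists w : 'I_d -> R, face V w) ->
  is_proj (face V) x z ->
  (1 < v i -> theta R V i = 1 -> z i = 1) /\
  (v i < 0 -> theta R V i = -1 -> z i = 0).
Proof.
move=> _ [hv vmin] _ [hz zmin].
have sq : \sum_k PP V v k = 1 by apply/hyp_iff.
have [z01 hzh] := hz.
have sp : \sum_k PP V z k = 1 by apply/hyp_iff.
have p0 : forall k, 0 <= PP V z k.
  move=> k; move: (z01 k) => /andP[a b]; rewrite /PP /cV /theta.
  by case: ifP => _; lra.
have Aq : forall Q, \sum_k Q k = 1 ->
    \sum_k (PP V x k - PP V v k) ^+ 2 <= \sum_k (PP V x k - Q k) ^+ 2.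
  move=> Q sQ.
  have hw : hyp V (Pinv V Q) by apply/hyp_iff; rewrite sumPinv.
  by have := dist_le (vmin _ hw); rewrite (distP V x v) distPinv.
have Bp : forall Q, \sum_k Q k = 1 -> (forall k, 0 <= Q k) ->
    \sum_k (PP V x k - PP V z k) ^+ 2 <= \sum_k (PP V x k - Q k) ^+ 2.
  move=> Q sQ Q0.
  have hw : face V (Pinv V Q).
    split; last by apply/hyp_iff; rewrite sumPinv.
    move=> k.
    have Q1 : Q k <= 1.
      rewrite -sQ (bigD1 k) //= lerDl; apply: sumr_ge0 => j _; apply: Q0.
    have := Q0 k; rewrite /Pinv /theta /cV.
    by case: ifP => _ h; apply/andP; split; lra.
  by have := dist_le (zmin _ hw); rewrite (distP V x z) distPinv.
have key := simplex (PP V x) (PP V v) (PP V z) i sq sp p0 Aq Bp.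
split=> h1 h2.
  have hi : i \in V.
    by move: h2; rewrite /theta; case: ifP => // _ h; exfalso; lra.
  have : PP V v i < 0 by rewrite /PP /cV /theta hi; lra.
  by move/key; rewrite /PP /cV /theta hi; lra.
have hi : i \notin V.
  by move: h2; rewrite /theta; case: ifP => // _ h; exfalso; lra.
have : PP V v i < 0 by rewrite /PP /cV /theta (negbTE hi); lra.
by move/key; rewrite /PP /cV /theta (negbTE hi); lra.
Qed.
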